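(* Let $\mathfrak{C}=(U,M,I,N,J)$ be a formal decision context. Then the set of necessary I-decision rules of $\mathfrak{C}$ is $$\overline{\mathfrak{R}}_{I}(\mathfrak{C})=\{(\cup [O]_{R_1},(\cup [O]_{R_1})^{\square_M})\rightarrow(O^{\uparrow_N\downarrow_N},O^{\uparrow_N})\mid O\in \mathrm{Ext}L_O(\mathfrak{C}_M),\ O\neq\emptyset,\ O^{\uparrow_N\downarrow_N}\neq U\}.$$
   Context: Formal context $(U,M,I)$: $U$ and $M$ are finite nonempty sets and $I\subseteq U\times M$. For $O\subseteq U$ and $C\subseteq M$ define: - $O^{\uparrow}=\{a\in M\mid \forall x\in O\,((x,a)\in I)\}$ and $C^{\downarrow}=\{x\in U\mid \forall a\in C\,((x,a)\in I)\}$; - $O^{\square}=\{a\in M\mid \forall x\in U\,((x,a)\in I\Rightarrow x\in O)\}$ and $C^{\lozenge}=\{x\in U\mid \exists a\in C\,((x,a)\in I)\}$. A formal concept is a pair $(O,C)$ with $O^\uparrow=C$ and $C^\downarrow=O$ (set $L$). An object-oriented concept is a pair $(O,C)$ with $O^\square=C$ and $C^\lozenge=O$ (set $L_O$). $\mathrm{Ext}$ denotes the set of extents (first components). Standing assumption: contexts are canonical, i.e. for all $x\in U$ and $a\in M$ we have $\{x\}^\uparrow\notin\{\emptyset,M\}$ and $\{a\}^\downarrow\notin\{\emptyset,U\}$. A formal decision context $\mathfrak{C}=(U,M,I,N,J)$ has conditional context $\mathfrak{C}_M=(U,M,I)$ and decision context $\mathfrak{C}_N=(U,N,J)$, with $M\cap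 N=\emptyset$. Operators carry the subscript $M$ or $N$ according to the context in which they are computed. An I-decision rule is $(O,C)\rightarrow(Y,D)$ with $(O,C)\in L_O(\mathfrak{C}_M)$, $(Y,D)\in L(\mathfrak{C}_N)$, $O\subseteq Y$, $O\ne\emptyset$ and $Y\ne U$; the set of these is $\mathfrak{R}_I(\mathfrak{C})$. Implication: $(O_1,C_1)\rightarrow(Y_1,D_1)\Rightarrow(O_2,C_2)\rightarrow(Y_2,D_2)$ iff $O_2\subseteq O_1\subseteq Y_1\subseteq Y_2$. A rule $r$ is necessary if there is no $r_1\in\mathfrak{R}_I(\mathfrak{C})$ with $r_1\neq r$ and $r_1\Rightarrow r$. $R_1$ is the equivalence relation on $\mathrm{Ext}L_O(\mathfrak{C}_M)$ given by $(O,Y)\in R_1$ iff $O^{\uparrow_N}=Y^{\uparrow_N}$. $[O]_{R_1}$ is the class of $O$, and $\cup[O]_{R_1}$ is the union of its members. *)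

(* Defs.v *)
From mathcomp Require Import all_boot.
Set Implicit Arguments. Unset Strict Implicit. Unset Printing Implicit Defensive.

Section Ops.
Variables (U M : finType) (I : U -> M -> bool).

Definition up (O : {set U}) : {set M} := [set a | [forall x in O, I x a]].
Definition down (C : {set M}) : {set U} := [set x | [forall a in C, I x a]].
Definition box (O : {set U}) : {set M} := [set a | [forall x, I x a ==> (x \in O)]].
Definition dia (C : {set M}) : {set U} := [set x | [exists a in C, I x a]].

Definition is_concept (O : {set U}) (C : {set M}) : bool := (up O == C) && (down C == O).
Definition is_oo_concept (O : {set U}) (C : {set M}) : bool := (box O == C) && (dia C == O).

Definition ext_oo (O : {set U}) : bool := [exists C, is_oo_concept O C].

Definition canonical_ctx : Prop :=
  (forall x : U, up [set x] != set0 /\ up [set x] != setT) /\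
  (forall a : M, down [set a] != set0 /\ down [set a] != setT).
End Ops.

Definition rule (U M N : finType) : Type :=
  prod (prod {set U} {set M}) (prod {set U} {set N}).

Section Rules.
Variables (U M N : finType) (I : U -> M -> bool) (J : U -> N -> bool).

Definition is_Irule (r : rule U M N) : Prop :=
  let: ((X, C), (Y, D)) := r in
  is_oo_concept I X C /\ is_concept J Y D /\ X \subset Y /\ X != set0 /\ Y != setT.

Definition rule_implies (r1 r2 : rule U M N) : Prop :=
  let: ((X1, _), (Y1, _)) := r1 in
  let: ((X2, _), (Y2, _)) := r2 in
  X2 \subset X1 /\ X1 \subset Y1 /\ Y1 \subset Y2.

Definition necessary (r : rule U M N) : Prop :=
  is_Irule r /\
  ~ (exists r1, is_Irule r1 /\ r1 <> r /\ rule_implies r1 r).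

Definition R1 (O Y : {set U}) : bool :=
  [&& ext_oo I O, ext_oo I Y & up J O == up J Y].

Definition class_union (O : {set U}) : {set U} :=
  \bigcup_(Y | R1 O Y) Y.
End Rules.

(* Main.v *)
Require Import Defs.
From mathcomp Require Import all_boot.
Set Implicit Arguments. Unset Strict Implicit. Unset Printing Implicit Defensive.

Section Gal.
Variables (U M : finType) (I : U -> M -> bool).

Lemma up_anti (O1 O2 : {set U}) : O1 \subset O2 -> up I O2 \subset up I O1.
Proof.
move=> s; apply/subsetP=> a; rewrite !inE => /forall_inP h.
apply/forall_inP=> x xO; apply: h; exact: (subsetP s).
Qed.

Lemma down_anti (C1 C2 : {set M}) : C1 \subset C2 -> down I C2 \subset down I C1.
Proof.
move=> s; apply/subsetP=> a; rewrite !inE => /forall_inP h.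
apply/forall_inP=> x xO; apply: h; exact: (subsetP s).
Qed.

Lemma galois (A : {set U}) (B : {set M}) : (A \subset down I B) = (B \subset up I A).
Proof.
apply/subsetP/subsetP => h y.
- rewrite inE => yB; apply/forall_inP => x xA.
  by move: (h x xA); rewrite inE => /forall_inP; apply.
- move=> yA; rewrite inE; apply/forall_inP => a aB.
  by move: (h a aB); rewrite inE => /forall_inP; apply.
Qed.

Lemma clos (O : {set U}) : O \subset down I (up I O).
Proof. by rewrite galois. Qed.

Lemma upclos (O : {set U}) : up I (down I (up I O)) = up I O.
Proof.
apply/eqP; rewrite eqEsubset; apply/andP; split.
  by apply: up_anti; apply: clos.
by rewrite -galois.
Qed.

Lemma ext_ooE (O : {set U}) : ext_oo I O = (dia I (box I O) == O).
Proof.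
apply/existsP/eqP.
- by move=> [C /andP[/eqP <- /eqP]].
- by move=> h; exists (box I O); rewrite /is_oo_concept eqxx h eqxx.
Qed.

Lemma box_mono (O1 O2 : {set U}) : O1 \subset O2 -> box I O1 \subset box I O2.
Proof.
move=> s; apply/subsetP=> a; rewrite !inE => /forallP h.
apply/forallP=> x; apply/implyP=> xa; apply: (subsetP s).
by move: (h x); rewrite xa.
Qed.
End Gal.

Section Cls.
Variables (U M N : finType) (I : U -> M -> bool) (J : U -> N -> bool).

Lemma cu_sup (O Y : {set U}) : R1 I J O Y -> Y \subset class_union I J O.
Proof. by move=> h; apply: (bigcup_sup Y). Qed.

Lemma cu_self (O : {set U}) : ext_oo I O -> O \subset class_union I J O.
Proof. by move=> h; apply: cu_sup; rewrite /R1 h eqxx. Qed.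

Lemma cu_up (O : {set U}) : ext_oo I O -> up J (class_union I J O) = up J O.
Proof.
move=> h; apply/eqP; rewrite eqEsubset up_anti ?cu_self //.
apply/subsetP => a; rewrite !inE => /forall_inP H; apply/forall_inP => x.
case/bigcupP => Y /and3P[_ _ /eqP E] xY.
move: (subsetP (subxx (up J O)) a); rewrite E.
have: a \in up J O by rewrite inE; apply/forall_inP.
rewrite E => aY _; move: aY; rewrite inE => /forall_inP; apply; done.
Qed.

Lemma cu_ext (O : {set U}) : ext_oo I (class_union I J O).
Proof.
rewrite ext_ooE eqEsubset; apply/andP; split.
- apply/subsetP => x; rewrite inE => /exists_inP[a]; rewrite inE => /forallP H xa.
  by move: (H x); rewrite xa.
- apply/subsetP => x /bigcupP[Y R xY].
  have sY := cu_sup R.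
  move: R => /and3P[_ hY _].
  move: hY; rewrite ext_ooE => /eqP E; move: xY; rewrite -E inE.
  case/exists_inP => a aB xa; rewrite inE; apply/exists_inP; exists a => //.
  exact: (subsetP (box_mono I sY)).
Qed.
End Cls.

Theorem theorem3p5 (U M N : finType) (I : U -> M -> bool) (J : U -> N -> bool)
  (hU : 0 < #|U|) (hM : 0 < #|M|) (hN : 0 < #|N|)
  (hcanM : canonical_ctx I) (hcanN : canonical_ctx J)
  (r : rule U M N) :
  necessary I J r <->
  exists O : {set U},
    [/\ ext_oo I O, O != set0, down J (up J O) != setT &
     r = ((class_union I J O, box I (class_union I J O)),
          (down J (up J O), up J O))].
Proof.
split.
- case: r => [[X C] [Y D]] [[/andP[/eqP hC /eqP hX] [/andP[/eqP hD /eqP hY] [XY [X0 YT]]]] nex].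
  have eX : ext_oo I X by apply/existsP; exists C; rewrite /is_oo_concept hC hX !eqxx.
  have cY : down J (up J X) \subset Y.
    by rewrite -hY; apply: down_anti; rewrite -galois hY.
  have cT : down J (up J X) != setT.
    apply: contra YT => /eqP E; rewrite eqEsubset subsetT /= -E //.
  have EY : Y = down J (up J X).
    case: (eqVneq Y (down J (up J X))) => // ne; exfalso; apply: nex.
    exists ((X, C), (down J (up J X), up J X)); split.
      split; first by rewrite /is_oo_concept hC hX !eqxx.
      split; first by rewrite /is_concept upclos !eqxx.
      by split; [apply: clos | split].
    split; first by case => E; rewrite E eqxx in ne.
    by rewrite /=; split => //; split => //; apply: clos.
  have ED : D = up J X by rewrite -hD EY upclos.
  set W := class_union I J X.
  have XW : X \subset W by apply: cu_self.
  have upW : up J W = up J X by apply: cu_up.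
  have EX : X = W.
    case: (eqVneq X W) => // ne; exfalso; apply: nex.
    exists ((W, box I W), (Y, D)); split.
      split; first by rewrite /is_oo_concept eqxx -ext_ooE; apply: cu_ext.
      split; first by rewrite /is_concept hD hY !eqxx.
      split; first by rewrite EY -upW; apply: clos.
      split => //; apply: contra X0 => /eqP W0; by rewrite -subset0 -W0.
    split; first by case => E; rewrite E eqxx in ne.
    split => //; split => //; by rewrite EY -upW; apply: clos.
  exists X; split => //.
  by rewrite -/W -hC EY ED -EX.
- case=> O [eO O0 OT ->].
  set W := class_union I J O.
  have OW : O \subset W by apply: cu_self.
  have upW : up J W = up J O by apply: cu_up.
  have eW : ext_oo I W by apply: cu_ext.
  split.
    split; first by rewrite /is_oo_concept eqxx -ext_ooE.
    split; first by rewrite /is_concept upclos !eqxx.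
    split; first by rewrite -upW; apply: clos.
    split => //; apply: contra O0 => /eqP W0; by rewrite -subset0 -W0.
  case=> [[[X1 C1] [Y1 D1]] [[/andP[/eqP hC /eqP hX] [/andP[/eqP hD /eqP hY] [XY [X0 YT]]]] [ne [WX [_ YY]]]]].
  apply: ne.
  have EY : Y1 = down J (up J O).
    apply/eqP; rewrite eqEsubset YY /= -hY -upW; apply: down_anti.
    by rewrite -galois hY; apply: subset_trans XY.
  have ED : D1 = up J O by rewrite -hD EY upclos.
  have eX : ext_oo I X1 by apply/existsP; exists C1; rewrite /is_oo_concept hC hX !eqxx.
  have uX : up J X1 = up J O.
    apply/eqP; rewrite eqEsubset; apply/andP; split.
      by rewrite -upW; apply: up_anti.
    by rewrite -galois -EY.
  have EX : X1 = W.
    apply/eqP; rewrite eqEsubset WX andbT; apply: cu_sup.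
    by rewrite /R1 eO eX uX eqxx.
  by rewrite -hC EX EY ED.
Qed.
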